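(* Let $u(x,y):=\frac13(y^3-x^3)$ for $(x,y)\in(-1,1)^2$, and let $X$ be the gradient flow $X'(t,x,y)=\nabla u(X(t,x,y))$, $X(0,x,y)=(x,y)$. i) In the open set $\Omega=(0,1)\times(-1,0)$ (resp. $(-1,0)\times(0,1)$), the point $(0,0)$ is positively (resp. negatively) stable for this flow. However, $\nabla u$ is not isotropically realizable in $\Omega$ (i.e. there is no solution of $\mathrm{div}(\sigma\nabla u)=0$ in $\Omega$) with any positive conductivity $\sigma\in C^1(\Omega)\cap L^\infty(\Omega)$. ii) In the open set $\Omega=(0,1)^2$ or $(-1,0)^2$, the point $(0,0)$ is not stable. Moreover, $\nabla u$ is isotropically realizable in $\Omega$ with some positive conductivity $\sigma_0\in C^1(\Omega)\cap L^\infty(\Omega)$. However, $\nabla u$ is not realizable in $\Omega$ with any positive conductivity $\sigma\in C^1(\Omega)\cap L^\infty(\Omega)$ such that $\sigma^{-1}\in L^\infty(\Omega)$.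
   Context: $(0,0)$ is the unique critical point of $u$ in $(-1,1)^2$ and $\nabla^2u(0,0)=0$ (non-hyperbolic). A critical point $x_*$ is positively (resp. negatively) stable in the considered region if there are a compact neighborhood $K_*$ of $x_*$ containing no other critical point and a neighborhood $Q_*\subset\mathrm{int}(K_* )$ of $x_*$ such that $X(t,x)\in K_*$ for all $x\in Q_*$ and all $t\ge0$ (resp. all $t\le0$). *)

(* Defs.v *)
From Stdlib Require Import Reals List.
From Coquelicot Require Import Coquelicot.
Open Scope R_scope.

Definition pt := (R * R)%type.

Definition box (p : pt) : Prop := -1 < fst p < 1 /\ -1 < snd p < 1.

Definition u (p : pt) : R := (snd p ^ 3 - fst p ^ 3) / 3.

Definition grad (f : pt -> R) (p : pt) : pt :=
  (Derive (fun x => f (x, snd p)) (fst p), Derive (fun y => f (fst p, y)) (snd p)).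

Definition div (F : pt -> pt) (p : pt) : R :=
  Derive (fun x => fst (F (x, snd p))) (fst p) + Derive (fun y => snd (F (fst p, y))) (snd p).

Definition is_critical (p : pt) : Prop := box p /\ grad u p = (0, 0).

Definition compact2 (K : pt -> Prop) : Prop :=
  forall (I : Type) (U : I -> pt -> Prop),
    (forall i, open (U i)) ->
    (forall p, K p -> exists i, U i p) ->
    exists l : list I, forall p, K p -> exists i, In i l /\ U i p.

Definition flow_sol (g : R -> pt) (p : pt) (t : R) : Prop :=
  g 0 = p /\
  forall s, (0 <= s <= t \/ t <= s <= 0) ->
    box (g s) /\ is_derive g s (grad u (g s)).

(* "X(t,p) is defined and X(t,p) \in K" *)
Definition flow_in (K : pt -> Prop) (p : pt) (t : R) : Prop :=
  (exists g, flow_sol g p t) /\ (forall g, flow_sol g p t -> K (g t)).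

Definition origin : pt := (0, 0).

Definition stable_dir (dir : bool) (Omega : pt -> Prop) : Prop :=
  exists (K Q : pt -> Prop),
    compact2 K /\ locally origin K /\
    (forall q, K q -> is_critical q -> q = origin) /\
    locally origin Q /\ (forall q, Q q -> locally q K) /\
    forall q t, Q q -> Omega q ->
      (if dir then 0 <= t else t <= 0) -> flow_in K q t.

Definition pos_stable := stable_dir true.
Definition neg_stable := stable_dir false.
Definition stable (Omega : pt -> Prop) : Prop := pos_stable Omega \/ neg_stable Omega.

Definition C1_on (Omega : pt -> Prop) (sigma : pt -> R) : Prop :=
  forall p, Omega p ->
    continuous sigma p /\
    ex_derive (fun x => sigma (x, snd p)) (fst p) /\
    ex_derive (fun y => sigma (fst p, y)) (snd p) /\
    continuous (fun q => Derive (fun x => sigma (x, snd q)) (fst q)) p /\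
    continuous (fun q => Derive (fun y => sigma (fst q, y)) (snd q)) p.

Definition admissible (Omega : pt -> Prop) (sigma : pt -> R) : Prop :=
  C1_on Omega sigma /\ (forall p, Omega p -> 0 < sigma p) /\
  (exists M, forall p, Omega p -> Rabs (sigma p) <= M).

Definition inv_bounded (Omega : pt -> Prop) (sigma : pt -> R) : Prop :=
  exists M, forall p, Omega p -> Rabs (/ sigma p) <= M.

Definition realizes (Omega : pt -> Prop) (sigma : pt -> R) : Prop :=
  forall p, Omega p ->
    div (fun q => (sigma q * fst (grad u q), sigma q * snd (grad u q))) p = 0.

Definition Omega_pn (p : pt) : Prop := 0 < fst p < 1 /\ -1 < snd p < 0.
Definition Omega_np (p : pt) : Prop := -1 < fst p < 0 /\ 0 < snd p < 1.
Definition Omega_pp (p : pt) : Prop := 0 < fst p < 1 /\ 0 < snd p < 1.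
Definition Omega_nn (p : pt) : Prop := -1 < fst p < 0 /\ -1 < snd p < 0.

(* Main.v *)
Require Import Defs.
From Stdlib Require Import Reals Lra Psatz List Classical ClassicalEpsilon.
From Coquelicot Require Import Coquelicot.
Open Scope R_scope.

Lemma grad_u (p : pt) : grad u p = (- (fst p ^ 2), snd p ^ 2).
Proof.
  unfold grad, u; simpl. f_equal.
  - apply is_derive_unique. auto_derive; auto. field.
  - apply is_derive_unique. auto_derive; auto. field.
Qed.

Lemma is_derive_pair (f g : R -> R) s a b :
  is_derive f s a -> is_derive g s b ->
  is_derive (fun t => (f t, g t) : pt) s (a, b).
Proof.
  intros Hf Hg. unfold is_derive.
  eapply filterdiff_ext_lin.
  - apply (filterdiff_comp'_2 f g (fun x y => (x, y)) s _ _ (fun x y => (x,y)) Hf Hg).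
    apply filterdiff_ext_lin with (l1 := fun y => y).
    eapply filterdiff_ext. 2: apply filterdiff_id.
    intros [x y]; reflexivity.
    intros [x y]; reflexivity.
  - intros y. reflexivity.
Qed.

Lemma is_derive_fst (g : R -> pt) s l :
  is_derive g s l -> is_derive (fun t => fst (g t)) s (fst l).
Proof.
  intros H. unfold is_derive in *.
  eapply filterdiff_ext_lin.
  apply (filterdiff_comp g fst _ fst H).
  apply filterdiff_linear, is_linear_fst.
  intros y; reflexivity.
Qed.

Lemma is_derive_snd (g : R -> pt) s l :
  is_derive g s l -> is_derive (fun t => snd (g t)) s (snd l).
Proof.
  intros H. unfold is_derive in *.
  eapply filterdiff_ext_lin.
  apply (filterdiff_comp g snd _ snd H).
  apply filterdiff_linear, is_linear_snd.
  intros y; reflexivity.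
Qed.

Lemma ball_pt (p q : pt) e : ball p e q <-> Rabs (fst q - fst p) < e /\ Rabs (snd q - snd p) < e.
Proof. split; intros [H1 H2]; split; assumption. Qed.

Lemma rect_locally a1 b1 a2 b2 (p : pt) :
  a1 < fst p < b1 -> a2 < snd p < b2 ->
  locally p (fun q : pt => a1 < fst q < b1 /\ a2 < snd q < b2).
Proof.
  intros H1 H2.
  remember (Rmin (Rmin (fst p - a1) (b1 - fst p)) (Rmin (snd p - a2) (b2 - snd p))) as e eqn:Ee.
  assert (He : 0 < e).
  { rewrite Ee. repeat apply Rmin_glb_lt; lra. }
  exists (mkposreal e He). intros q Hq. apply ball_pt in Hq. cbn [pos] in Hq.
  destruct Hq as [Hq1 Hq2].
  assert (e <= fst p - a1 /\ e <= b1 - fst p /\ e <= snd p - a2 /\ e <= b2 - snd p) as [? [? [? ?]]].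
  { rewrite Ee. pose proof (Rmin_l (Rmin (fst p - a1) (b1 - fst p)) (Rmin (snd p - a2) (b2 - snd p))).
    pose proof (Rmin_r (Rmin (fst p - a1) (b1 - fst p)) (Rmin (snd p - a2) (b2 - snd p))).
    pose proof (Rmin_l (fst p - a1) (b1 - fst p)). pose proof (Rmin_r (fst p - a1) (b1 - fst p)).
    pose proof (Rmin_l (snd p - a2) (b2 - snd p)). pose proof (Rmin_r (snd p - a2) (b2 - snd p)).
    lra. }
  apply Rabs_def2 in Hq1. apply Rabs_def2 in Hq2. unfold minus, plus, opp in Hq1, Hq2; simpl in Hq1, Hq2. repeat split; lra.
Qed.

Definition Iv (t s : R) : Prop := 0 <= s <= t \/ t <= s <= 0.

Lemma Iv_between t s c : Iv t s -> Rmin 0 s <= c <= Rmax 0 s -> Iv t c.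
Proof.
  unfold Iv, Rmin, Rmax. destruct (Rle_dec 0 s); intros; lra.
Qed.

Lemma ode_unique (z : R -> R) (k t : R) :
  -1 <= k <= 1 ->
  (forall s, Iv t s -> Rabs (z s) <= 1 /\ is_derive z s (k * z s ^ 2)) ->
  forall s, Iv t s -> z s * (1 - k * z 0 * s) = z 0.
Proof.
  intros Hk Hz s Hs.
  set (z0 := z 0).
  set (V := fun r => (z r * (1 - k * z0 * r) - z0) ^ 2).
  assert (HV : forall r, Iv t r -> is_derive V r (2 * k * z r * V r)).
  { intros r Hr. destruct (Hz r Hr) as [_ Hd]. unfold V.
    auto_derive. exists (k * z r ^ 2); exact Hd.
    assert (E: Derive (fun x : R => z x) r = k * z r ^ 2) by (apply is_derive_unique; exact Hd). rewrite E. ring. }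
  assert (Vnn : forall r, 0 <= V r). { intros r; unfold V. apply pow2_ge_0. }
  assert (V0 : V 0 = 0). { unfold V, z0. ring. }
  assert (Hfin : V s = 0).
  { destruct (Rle_dec 0 s) as [Hs0|Hs0].
    - set (W := fun r => V r * exp (-2 * r)).
      destruct (MVT_gen W 0 s (fun r => (2 * k * z r - 2) * V r * exp (-2 * r))) as [c [Hc Hmvt]].
      + intros r Hr. assert (Iv t r) by (apply (Iv_between t s); [exact Hs| lra]).
        unfold W. auto_derive. exists (2 * k * z r * V r). apply HV; auto.
        assert (E: Derive (fun x : R => V x) r = 2 * k * z r * V r) by (apply is_derive_unique; apply HV; exact H). rewrite E. ring.
      + intros r Hr. assert (Iv t r) by (apply (Iv_between t s); [exact Hs| lra]).
        apply continuity_pt_filterlim. apply (ex_derive_continuous W r).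
        unfold W. auto_derive. exists (2 * k * z r * V r). apply HV; auto.
      + assert (Iv t c) by (apply (Iv_between t s); [exact Hs| lra]).
        destruct (Hz c H) as [Hzc _]. apply Rabs_le_between in Hzc.
        unfold W in Hmvt. rewrite V0 in Hmvt.
        assert (0 < exp (-2 * s)) by apply exp_pos.
        assert (0 < exp (-2 * c)) by apply exp_pos.
        pose proof (Vnn s). pose proof (Vnn c).
        assert ((2 * k * z c - 2) <= 0) by nra.
        assert ((2 * k * z c - 2) * V c * exp (-2 * c) * (s - 0) <= 0).
        { apply Rmult_le_0_r; [|lra]. apply Rmult_le_0_r; [|lra]. nra. }
        nra.
    - set (W := fun r => V r * exp (2 * r)).
      destruct (MVT_gen W 0 s (fun r => (2 * k * z r + 2) * V r * exp (2 * r))) as [c [Hc Hmvt]].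
      + intros r Hr. assert (Iv t r) by (apply (Iv_between t s); [exact Hs| lra]).
        unfold W. auto_derive. exists (2 * k * z r * V r). apply HV; auto.
        assert (E: Derive (fun x : R => V x) r = 2 * k * z r * V r) by (apply is_derive_unique; apply HV; exact H). rewrite E. ring.
      + intros r Hr. assert (Iv t r) by (apply (Iv_between t s); [exact Hs| lra]).
        apply continuity_pt_filterlim. apply (ex_derive_continuous W r).
        unfold W. auto_derive. exists (2 * k * z r * V r). apply HV; auto.
      + assert (Iv t c) by (apply (Iv_between t s); [exact Hs| lra]).
        destruct (Hz c H) as [Hzc _]. apply Rabs_le_between in Hzc.
        unfold W in Hmvt. rewrite V0 in Hmvt.
        assert (0 < exp (2 * s)) by apply exp_pos.
        assert (0 < exp (2 * c)) by apply exp_pos.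
        pose proof (Vnn s). pose proof (Vnn c).
        assert (0 <= (2 * k * z c + 2)) by nra.
        assert (0 <= (2 * k * z c + 2) * V c * exp (2 * c)).
        { apply Rmult_le_pos; [|lra]. apply Rmult_le_pos; lra. }
        nra. }
  unfold V in Hfin. fold z0. nra.
Qed.

Definition Ksq (r : R) (p : pt) : Prop := -r <= fst p <= r /\ -r <= snd p <= r.

Lemma compact_sq r : compact2 (Ksq r).
Proof.
  intros I U HU Hcov.
  assert (H : forall p : pt, exists e : posreal,
             (Ksq r p -> exists i, forall q, ball p e q -> U i q)).
  { intro p. destruct (classic (Ksq r p)) as [Hp|Hp].
    - destruct (Hcov p Hp) as [i Hi]. destruct (HU i p Hi) as [e He].
      exists e. intros _. exists i. exact He.
    - exists (mkposreal 1 Rlt_0_1). tauto. }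
  set (delta := fun p => proj1_sig (constructive_indefinite_description _ (H p))).
  assert (Hd : forall p, Ksq r p -> exists i, forall q, ball p (delta p) q -> U i q).
  { intros p. unfold delta. destruct (constructive_indefinite_description _ (H p)) as [e He].
    exact He. }
  pose (tp := fun t : Compactness.Tn 2 R => (fst t, fst (snd t)) : pt).
  pose proof (compactness_list 2 (-r, (-r, tt)) (r, (r, tt)) (fun t => delta (tp t))) as HL.
  apply NNPP; intro Hn; apply HL; intros [l Hl]; apply Hn.
  assert (Hli : forall l : list (Compactness.Tn 2 R), exists li : list I,
     forall t, In t l -> bounded_n 2 (-r, (-r, tt)) (r, (r, tt)) t ->
       exists i, In i li /\ forall q, ball (tp t) (delta (tp t)) q -> U i q).
  { clear Hl. induction l0 as [|t0 l0 IH].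
    - exists nil. intros t [].
    - destruct IH as [li Hli].
      destruct (classic (bounded_n 2 (-r, (-r, tt)) (r, (r, tt)) t0)) as [Hb|Hb].
      + assert (Ksq r (tp t0)) as Hk.
        { destruct t0 as [a [b []]]. simpl in Hb. unfold Ksq, tp; simpl. tauto. }
        destruct (Hd _ Hk) as [i0 Hi0].
        exists (i0 :: li). intros t [<-|Ht] Hbt.
        * exists i0. split; [left; reflexivity| exact Hi0].
        * destruct (Hli t Ht Hbt) as [i [Hin Hi]]. exists i. split; [right; exact Hin| exact Hi].
      + exists li. intros t [<-|Ht] Hbt.
        * contradiction.
        * apply Hli; assumption. }
  destruct (Hli l) as [li Hli'].
  exists li. intros p Hp.
  destruct (Hl (fst p, (snd p, tt))) as [t [Hin [Hb Hc]]].
  { unfold Ksq in Hp. simpl. tauto. }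
  destruct (Hli' t Hin Hb) as [i [Hi HU']].
  exists i. split; [exact Hi|]. apply HU'.
  apply ball_pt. destruct t as [a [b []]]. simpl in Hc. unfold tp; simpl.
  destruct Hc as [H1 [H2 _]].
  unfold tp in *; simpl in *. split; assumption.
Qed.
Definition Dx (s : pt -> R) (p : pt) := Derive (fun x => s (x, snd p)) (fst p).
Definition Dy (s : pt -> R) (p : pt) := Derive (fun y => s (fst p, y)) (snd p).

Lemma pde_identity (s : pt -> R) (Om : pt -> Prop) :
  C1_on Om s -> realizes Om s -> forall p, Om p ->
  Dx s p * (- (fst p ^ 2)) + Dy s p * (snd p ^ 2) = 2 * (fst p - snd p) * s p.
Proof.
  intros HC HR p Hp.
  destruct (HC p Hp) as [_ [Hex [Hey _]]].
  pose proof (HR p Hp) as H. unfold div in H. 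
  rewrite (Derive_ext (fun x => fst ((fun q => (s q * fst (grad u q), s q * snd (grad u q))) (x, snd p))) (fun x => s (x, snd p) * (- (x ^ 2)))) in H
    by (intro t; cbn [fst snd]; rewrite grad_u; reflexivity).
  rewrite (Derive_ext (fun y => snd ((fun q => (s q * fst (grad u q), s q * snd (grad u q))) (fst p, y))) (fun y => s (fst p, y) * (y ^ 2))) in H
    by (intro t; cbn [fst snd]; rewrite grad_u; reflexivity).
  assert (E1 : Derive (fun x => s (x, snd p) * (- (x ^ 2))) (fst p)
            = Dx s p * (- (fst p ^ 2)) + s (fst p, snd p) * (- (2 * fst p))).
  { apply is_derive_unique. apply (is_derive_mult (fun x => s (x, snd p)) (fun x => - (x ^ 2))).
    - apply Derive_correct; exact Hex.
    - auto_derive; auto. ring.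
    - intros; apply Rmult_comm. }
  assert (E2 : Derive (fun y => s (fst p, y) * (y ^ 2)) (snd p)
            = Dy s p * (snd p ^ 2) + s (fst p, snd p) * (2 * snd p)).
  { apply is_derive_unique. apply (is_derive_mult (fun y => s (fst p, y)) (fun y => y ^ 2)).
    - apply Derive_correct; exact Hey.
    - auto_derive; auto. ring.
    - intros; apply Rmult_comm. }
  rewrite E1, E2 in H. destruct p as [x y]. simpl in *. lra.
Qed.

Lemma sigma_diff (s : pt -> R) (Om : pt -> Prop) (p : pt) :
  (forall q, Om q -> locally q Om) -> C1_on Om s -> Om p ->
  differentiable_pt_lim (fun a b => s (a, b)) (fst p) (snd p) (Dx s p) (Dy s p).
Proof.
  intros Hop HC Hp.
  apply filterdiff_differentiable_pt_lim.
  destruct p as [x y].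
  eapply filterdiff_ext_lin.
  apply (is_derive_filterdiff (fun a b => s (a, b)) x y
           (fun a b => Derive (fun z => s (z, b)) a) (Derive (fun z => s (x, z)) y)).
  - apply (filter_imp Om). 2: apply Hop; exact Hp.
    intros [u v] Hu. simpl. apply Derive_correct.
    destruct (HC _ Hu) as [_ [Hex _]]. exact Hex.
  - apply Derive_correct. destruct (HC _ Hp) as [_ [_ [Hey _]]]. exact Hey.
  - destruct (HC _ Hp) as [_ [_ [_ [Hc _]]]]. exact Hc.
  - intros [u v]. reflexivity.
Qed.

Definition hcurve (s : pt -> R) (c a : R) : R :=
  s (/ a, / (c - a)) * ((/ a) ^ 2 * (/ (c - a)) ^ 2).

Lemma hcurve_derive (s : pt -> R) (Om : pt -> Prop) c a :
  (forall q, Om q -> locally q Om) -> C1_on Om s -> realizes Om s ->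
  a <> 0 -> c - a <> 0 -> Om (/ a, / (c - a)) ->
  is_derive (hcurve s c) a 0.
Proof.
  intros Hop HC HR Ha Hca Hp.
  set (p := (/ a, / (c - a)) : pt).
  assert (HS : is_derive (fun t => s (/ t, / (c - t))) a
                 (Dx s p * (- (/ a) ^ 2) + Dy s p * ((/ (c - a)) ^ 2))).
  { apply is_derive_Reals.
    apply (derivable_pt_lim_comp_2d (fun x y => s (x, y)) (fun t => / t) (fun t => / (c - t))).
    - apply (sigma_diff s Om p Hop HC Hp).
    - apply is_derive_Reals. auto_derive; auto. field; auto.
    - apply is_derive_Reals. auto_derive; auto. field; auto. }
  assert (HR2 : is_derive (fun t => (/ t) ^ 2 * (/ (c - t)) ^ 2) a
                  (2 * (/ a) ^ 2 * (/ (c - a)) ^ 2 * (/ (c - a) - / a))).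
  { auto_derive; auto. field; auto. }
  pose proof (is_derive_mult _ _ a _ _ HS HR2 (fun x y => Rmult_comm x y)) as HM.
  unfold hcurve. eapply is_derive_ext. { intro t. reflexivity. }
  replace 0 with (plus (mult (Dx s p * - (/ a) ^ 2 + Dy s p * (/ (c - a)) ^ 2) ((/ a) ^ 2 * (/ (c - a)) ^ 2))
                     (mult (s (/ a, / (c - a))) (2 * (/ a) ^ 2 * (/ (c - a)) ^ 2 * (/ (c - a) - / a)))).
  exact HM.
  pose proof (pde_identity s Om HC HR p Hp) as Hid. unfold p in Hid. simpl in Hid.
  unfold plus, mult; simpl. unfold p.
  rewrite Hid. ring.
Qed.

Lemma hcurve_const (s : pt -> R) (Om : pt -> Prop) c a1 a2 :
  (forall q, Om q -> locally q Om) -> C1_on Om s -> realizes Om s -> a1 <= a2 ->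
  (forall a, a1 <= a <= a2 -> a <> 0 /\ c - a <> 0 /\ Om (/ a, / (c - a))) ->
  hcurve s c a2 = hcurve s c a1.
Proof.
  intros Hop HC HR H12 Hin.
  destruct (MVT_gen (hcurve s c) a1 a2 (fun _ => 0)) as [x [_ Hx]].
  - intros x Hx. rewrite Rmin_left, Rmax_right in Hx by lra.
    destruct (Hin x ltac:(lra)) as [? [? ?]]. eapply hcurve_derive; eauto.
  - intros x Hx. rewrite Rmin_left, Rmax_right in Hx by lra.
    destruct (Hin x ltac:(lra)) as [? [? ?]].
    apply continuity_pt_filterlim. apply (ex_derive_continuous (hcurve s c) x).
    exists 0. eapply hcurve_derive; eauto.
  - lra.
Qed.
Definition s0f (x y : R) : R := x * x * (y * y) * / ((x + y) * (x + y) * ((x + y) * (x + y))).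
Definition sig0 (p : pt) : R := s0f (fst p) (snd p).
Definition d1f (x y : R) : R :=
  2 * x * (y * y) * (y - x) * / ((x + y) * (x + y) * ((x + y) * (x + y)) * (x + y)).
Definition d2f (x y : R) : R :=
  2 * (x * x) * y * (x - y) * / ((x + y) * (x + y) * ((x + y) * (x + y)) * (x + y)).

Ltac c2d := repeat (first [ apply continuity_2d_pt_mult | apply continuity_2d_pt_plus
  | apply continuity_2d_pt_minus | apply continuity_2d_pt_id1 | apply continuity_2d_pt_id2
  | apply continuity_2d_pt_const | apply continuity_2d_pt_opp | apply continuity_2d_pt_inv ]).

Lemma cont2 (f : R -> R -> R) (p : pt) :
  continuity_2d_pt f (fst p) (snd p) -> continuous (fun q : pt => f (fst q) (snd q)) p.
Proof.
  intros H. destruct p as [x y]. apply continuity_2d_pt_filterlim in H. exact H.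
Qed.

Lemma s0_dx x y : x + y <> 0 -> is_derive (fun t => s0f t y) x (d1f x y).
Proof. intros H. unfold s0f, d1f. auto_derive. repeat split; auto.
  field. auto. Qed.
Lemma s0_dy x y : x + y <> 0 -> is_derive (fun t => s0f x t) y (d2f x y).
Proof. intros H. unfold s0f, d2f. auto_derive. repeat split; auto.
  field. auto. Qed.

Lemma cont_s0 x y : x + y <> 0 -> continuity_2d_pt s0f x y.
Proof. intros H. unfold s0f. c2d.
  repeat apply Rmult_integral_contrapositive_currified; auto. Qed.

Lemma cont_d1 x y : x + y <> 0 -> continuity_2d_pt d1f x y.
Proof. intros H. unfold d1f. c2d.
  repeat apply Rmult_integral_contrapositive_currified; auto. Qed.

Lemma cont_d2 x y : x + y <> 0 -> continuity_2d_pt d2f x y.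
Proof. intros H. unfold d2f. c2d.
  repeat apply Rmult_integral_contrapositive_currified; auto. Qed.

Lemma sig0_good (Om : pt -> Prop) :
  (forall q, Om q -> locally q Om) -> (forall q, Om q -> 0 < fst q * snd q) ->
  admissible Om sig0 /\ realizes Om sig0.
Proof.
  intros Hop Hxy.
  assert (Hnz : forall q, Om q -> fst q + snd q <> 0).
  { intros q Hq E. specialize (Hxy q Hq). assert (snd q = - fst q) by lra.
    rewrite H in Hxy. nra. }
  split; [split; [|split]|].
  - intros p Hp. pose proof (Hnz p Hp) as Hn. repeat split.
    + apply (cont2 s0f p). apply cont_s0; auto.
    + exists (d1f (fst p) (snd p)). apply s0_dx; auto.
    + exists (d2f (fst p) (snd p)). apply s0_dy; auto.
    + apply continuous_ext_loc with (g := fun q : pt => d1f (fst q) (snd q)).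
      * apply (filter_imp Om); [|apply Hop; exact Hp].
        intros q Hq. symmetry. apply is_derive_unique. apply s0_dx; auto.
      * apply (cont2 d1f p). apply cont_d1; auto.
    + apply continuous_ext_loc with (g := fun q : pt => d2f (fst q) (snd q)).
      * apply (filter_imp Om); [|apply Hop; exact Hp].
        intros q Hq. symmetry. apply is_derive_unique. apply s0_dy; auto.
      * apply (cont2 d2f p). apply cont_d2; auto.
  - intros p Hp. pose proof (Hnz p Hp). pose proof (Hxy p Hp).
    unfold sig0, s0f. destruct p as [x y]; simpl in *.
    assert (0 < (x + y) * (x + y) * ((x + y) * (x + y))) by nra.
    assert (0 < x * x * (y * y)) by nra.
    apply Rmult_lt_0_compat; [lra|]. apply Rinv_0_lt_compat; lra.
  - exists 1. intros p Hp. pose proof (Hnz p Hp). pose proof (Hxy p Hp).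
    unfold sig0, s0f. destruct p as [x y]; simpl in *.
    assert (0 < (x + y) * (x + y) * ((x + y) * (x + y))) by nra.
    assert (0 < x * x * (y * y)) by nra.
    assert (x * x * (y * y) <= (x + y) * (x + y) * ((x + y) * (x + y))).
    { assert (x * y <= (x + y) * (x + y)) by nra. nra. }
    rewrite Rabs_right.
    + replace 1 with (((x + y) * (x + y) * ((x + y) * (x + y))) * / ((x + y) * (x + y) * ((x + y) * (x + y)))) by (field; lra).
      apply Rmult_le_compat_r; [left; apply Rinv_0_lt_compat; lra| lra].
    + left. apply Rmult_lt_0_compat; [lra|]. apply Rinv_0_lt_compat; lra.
  - intros p Hp. pose proof (Hnz p Hp) as Hn. unfold div.
    rewrite (Derive_ext (fun x => fst ((fun q => (sig0 q * fst (grad u q), sig0 q * snd (grad u q))) (x, snd p))) (fun x => s0f x (snd p) * (- (x ^ 2))))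
      by (intro t; cbn [fst snd]; rewrite grad_u; reflexivity).
    rewrite (Derive_ext (fun y => snd ((fun q => (sig0 q * fst (grad u q), sig0 q * snd (grad u q))) (fst p, y))) (fun y => s0f (fst p) y * (y ^ 2)))
      by (intro t; cbn [fst snd]; rewrite grad_u; reflexivity).
    rewrite (is_derive_unique _ _ (d1f (fst p) (snd p) * (- (fst p ^ 2)) + s0f (fst p) (snd p) * (- (2 * fst p)))).
    rewrite (is_derive_unique _ _ (d2f (fst p) (snd p) * (snd p ^ 2) + s0f (fst p) (snd p) * (2 * snd p))).
    + unfold d1f, d2f, s0f. field.
      repeat apply Rmult_integral_contrapositive_currified; auto.
    + apply (is_derive_mult (fun y => s0f (fst p) y) (fun y => y ^ 2)).
      * apply s0_dy; auto.
      * auto_derive; auto. ring.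
      * intros; apply Rmult_comm.
    + apply (is_derive_mult (fun x => s0f x (snd p)) (fun x => - (x ^ 2))).
      * apply s0_dx; auto.
      * auto_derive; auto. ring.
      * intros; apply Rmult_comm.
Qed.


Lemma flow_x g q t : flow_sol g q t -> forall s, Iv t s ->
  fst (g s) * (1 - (-1) * fst q * s) = fst q.
Proof.
  intros [H0 H] s Hs.
  assert (E : fst q = fst (g 0)) by (rewrite H0; reflexivity).
  rewrite E. apply (ode_unique (fun s => fst (g s)) (-1) t); [lra| |exact Hs].
  intros r Hr. destruct (H r Hr) as [[Hb1 _] Hd]. split.
  - apply Rabs_le. lra.
  - replace (-1 * fst (g r) ^ 2) with (fst (grad u (g r))) by (rewrite grad_u; simpl; ring).
    apply is_derive_fst. exact Hd.
Qed.

Lemma flow_y g q t : flow_sol g q t -> forall s, Iv t s ->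
  snd (g s) * (1 - 1 * snd q * s) = snd q.
Proof.
  intros [H0 H] s Hs.
  assert (E : snd q = snd (g 0)) by (rewrite H0; reflexivity).
  rewrite E. apply (ode_unique (fun s => snd (g s)) 1 t); [lra| |exact Hs].
  intros r Hr. destruct (H r Hr) as [[_ Hb2] Hd]. split.
  - apply Rabs_le. lra.
  - replace (1 * snd (g r) ^ 2) with (snd (grad u (g r))) by (rewrite grad_u; simpl; ring).
    apply is_derive_snd. exact Hd.
Qed.

Lemma abs_shrink z d x : 1 <= d -> z * d = x -> Rabs z <= Rabs x.
Proof.
  intros Hd H. rewrite <- H. rewrite Rabs_mult. rewrite (Rabs_right d) by lra.
  pose proof (Rabs_pos z). nra.
Qed.

Lemma ball_pt2 (p q : pt) (e : R) : ball p e q ->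
  fst p - e < fst q < fst p + e /\ snd p - e < snd q < snd p + e.
Proof.
  intros [H1 H2]. change (Rabs (fst q - fst p) < e) in H1. change (Rabs (snd q - snd p) < e) in H2.
  apply Rabs_lt_between in H1. apply Rabs_lt_between in H2. lra.
Qed.

Definition Qsq (p : pt) : Prop := Rabs (fst p) < 1/4 /\ Rabs (snd p) < 1/4.

Lemma stab_generic (dir : bool) (Om : pt -> Prop) :
  (forall q s, Om q -> (if dir then 0 <= s else s <= 0) ->
     1 <= 1 + fst q * s /\ 1 <= 1 - snd q * s) ->
  stable_dir dir Om.
Proof.
  intros Hd. exists (Ksq (1/2)), Qsq.
  split; [apply compact_sq|]. split; [|split; [|split; [|split]]].
  - exists (mkposreal (1/2) ltac:(lra)). intros q Hq. apply ball_pt2 in Hq. unfold origin in Hq; simpl in Hq.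
    unfold Ksq. lra.
  - intros [x y] _ [_ Hc]. rewrite grad_u in Hc. simpl in Hc. injection Hc as E1 E2.
    unfold origin. f_equal; nra.
  - exists (mkposreal (1/4) ltac:(lra)). intros q Hq. apply ball_pt2 in Hq. unfold origin in Hq; simpl in Hq.
    split; apply Rabs_lt_between; lra.
  - intros q [Hq1 Hq2]. exists (mkposreal (1/4) ltac:(lra)). intros r Hr. apply ball_pt2 in Hr. simpl in Hr.
    apply Rabs_lt_between in Hq1. apply Rabs_lt_between in Hq2. unfold Ksq. lra.
  - intros q t [Hq1 Hq2] HOm Ht.
    assert (Hs : forall s, Iv t s -> (if dir then 0 <= s else s <= 0)).
    { intros s Hs; destruct dir; unfold Iv in Hs; lra. }
    split.
    + exists (fun s => (fst q / (1 + fst q * s), snd q / (1 - snd q * s))). split.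
      * destruct q as [x y]; simpl. f_equal; field.
      * intros s Hs'. destruct (Hd q s HOm (Hs s Hs')) as [D1 D2].
        assert (A1 : Rabs (fst q / (1 + fst q * s)) <= Rabs (fst q)).
        { apply (abs_shrink _ (1 + fst q * s)); [lra|]. field. lra. }
        assert (A2 : Rabs (snd q / (1 - snd q * s)) <= Rabs (snd q)).
        { apply (abs_shrink _ (1 - snd q * s)); [lra|]. field. lra. }
        split.
        -- unfold box; simpl.
           assert (Rabs (fst q / (1 + fst q * s)) < 1) by lra.
           assert (Rabs (snd q / (1 - snd q * s)) < 1) by lra.
           apply Rabs_lt_between in H. apply Rabs_lt_between in H0. lra.
        -- rewrite grad_u. simpl. apply is_derive_pair.
           ++ auto_derive. lra. field. lra.
           ++ auto_derive. lra. field. lra.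
    + intros g Hg.
      assert (Ivt : Iv t t) by (unfold Iv; destruct dir; lra).
      destruct (Hd q t HOm (Hs t Ivt)) as [D1 D2].
      pose proof (flow_x g q t Hg t Ivt) as Ex.
      pose proof (flow_y g q t Hg t Ivt) as Ey.
      assert (A1 : Rabs (fst (g t)) <= Rabs (fst q)).
      { apply (abs_shrink _ (1 + fst q * t)); [lra|]. replace (1 + fst q * t) with (1 - -1 * fst q * t) by ring; exact Ex. }
      assert (A2 : Rabs (snd (g t)) <= Rabs (snd q)).
      { apply (abs_shrink _ (1 - snd q * t)); [lra|]. replace (1 - snd q * t) with (1 - 1 * snd q * t) by ring; exact Ey. }
      assert (Rabs (fst (g t)) <= 1/2) by lra.
      assert (Rabs (snd (g t)) <= 1/2) by lra.
      apply Rabs_le_between in H. apply Rabs_le_between in H0. unfold Ksq. lra.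
Qed.


Lemma Q_pts (Q : pt -> Prop) : locally origin Q ->
  exists e, 0 < e < 1 /\ Q (e, e) /\ Q (-e, -e).
Proof.
  intros [eps H]. pose proof (cond_pos eps) as Heps.
  set (e := Rmin (eps / 2) (1 / 2)).
  assert (0 < e /\ e <= eps / 2 /\ e <= 1/2) as [E1 [E2 E3]].
  { unfold e. split. apply Rmin_glb_lt; lra. split; [apply Rmin_l|apply Rmin_r]. }
  exists e. split; [lra|]. split; apply H; apply (proj2 (ball_pt _ _ _)); unfold origin; simpl;
    rewrite Rminus_0_r; split; apply Rabs_lt_between; lra.
Qed.

Lemma nonstab_pp : ~ stable Omega_pp.
Proof.
  intros [H|H]; destruct H as [K [Q [_ [_ [_ [HQ [_ Hfl]]]]]]];
  destruct (Q_pts Q HQ) as [e [He [Q1 Q2]]];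
  assert (Hie : 0 < / e) by (apply Rinv_0_lt_compat; lra).
  - destruct (Hfl (e, e) (/ e) Q1 ltac:(split; simpl; lra) ltac:(simpl; lra)) as [[g Hg] _].
    pose proof (flow_y g (e, e) (/ e) Hg (/ e) ltac:(left; lra)) as Ey. simpl in Ey.
    replace (1 - 1 * e * / e) with 0 in Ey by (field; lra). lra.
  - destruct (Hfl (e, e) (- / e) Q1 ltac:(split; simpl; lra) ltac:(simpl; lra)) as [[g Hg] _].
    pose proof (flow_x g (e, e) (- / e) Hg (- / e) ltac:(right; lra)) as Ex. simpl in Ex.
    replace (1 - -1 * e * - / e) with 0 in Ex by (field; lra). lra.
Qed.

Lemma nonstab_nn : ~ stable Omega_nn.
Proof.
  intros [H|H]; destruct H as [K [Q [_ [_ [_ [HQ [_ Hfl]]]]]]];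
  destruct (Q_pts Q HQ) as [e [He [Q1 Q2]]];
  assert (Hie : 0 < / e) by (apply Rinv_0_lt_compat; lra).
  - destruct (Hfl (-e, -e) (/ e) Q2 ltac:(split; simpl; lra) ltac:(simpl; lra)) as [[g Hg] _].
    pose proof (flow_x g (-e, -e) (/ e) Hg (/ e) ltac:(left; lra)) as Ex. simpl in Ex.
    replace (1 - -1 * - e * / e) with 0 in Ex by (field; lra). lra.
  - destruct (Hfl (-e, -e) (- / e) Q2 ltac:(split; simpl; lra) ltac:(simpl; lra)) as [[g Hg] _].
    pose proof (flow_y g (-e, -e) (- / e) Hg (- / e) ltac:(right; lra)) as Ey. simpl in Ey.
    replace (1 - 1 * - e * - / e) with 0 in Ey by (field; lra). lra.
Qed.

Lemma inv_pos2 a : 2 <= a -> 0 < / a <= 1/2.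
Proof. intros H. assert (0 < / a) by (apply Rinv_0_lt_compat; lra).
  assert (a * / a = 1) by (field; lra). split; nra. Qed.

Lemma inv_neg2 a : a <= -2 -> -1/2 <= / a < 0.
Proof. intros H. assert (/ a < 0) by (apply Rinv_lt_0_compat; lra).
  assert (a * / a = 1) by (field; lra). split; nra. Qed.

Lemma open_rect a1 b1 a2 b2 :
  forall q : pt, (a1 < fst q < b1 /\ a2 < snd q < b2) ->
    locally q (fun q : pt => a1 < fst q < b1 /\ a2 < snd q < b2).
Proof. intros q [H1 H2]. apply rect_locally; auto. Qed.


Lemma nr_pn s : admissible Omega_pn s -> ~ realizes Omega_pn s.
Proof.
  intros [HC [Hpos [M HM]]] HR.
  assert (Hop : forall q, Omega_pn q -> locally q Omega_pn) by apply (open_rect 0 1 (-1) 0).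
  assert (Hin : forall a, 2 <= a -> a <> 0 /\ 0 - a <> 0 /\ Omega_pn (/ a, / (0 - a))).
  { intros a Ha. pose proof (inv_pos2 a Ha). replace (0 - a) with (- a) by ring.
    rewrite Rinv_opp. split; [lra|]. split; [lra|]. split; simpl; lra. }
  set (K0 := hcurve s 0 2).
  assert (HK0 : 0 < K0).
  { unfold K0, hcurve. destruct (Hin 2 ltac:(lra)) as [_ [_ Hp]].
    pose proof (Hpos _ Hp). apply Rmult_lt_0_compat; [lra|].
    assert (/ 2 <> 0) by (apply Rinv_neq_0_compat; lra).
    assert (/ (0 - 2) <> 0) by (apply Rinv_neq_0_compat; lra).
    assert (0 < (/ 2) ^ 2) by (apply pow2_gt_0; auto).
    assert (0 < (/ (0 - 2)) ^ 2) by (apply pow2_gt_0; auto). nra. }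
  assert (HM0 : 0 <= M).
  { destruct (Hin 2 ltac:(lra)) as [_ [_ Hp]]. pose proof (HM _ Hp). pose proof (Rabs_pos (s (/ 2, / (0 - 2)))). lra. }
  set (A := 2 + M / K0).
  assert (HA : 2 <= A) by (unfold A; assert (0 <= M / K0) by (apply Rdiv_le_0_compat; lra); lra).
  assert (Heq : hcurve s 0 A = hcurve s 0 2).
  { apply (hcurve_const s Omega_pn 0 2 A Hop HC HR HA). intros a Ha. apply Hin; lra. }
  destruct (Hin A HA) as [HA1 [HA2 HpA]].
  assert (ES : s (/ A, / (0 - A)) = hcurve s 0 A * (A ^ 2 * A ^ 2)).
  { unfold hcurve. field. lra. }
  pose proof (HM _ HpA) as HB. rewrite Rabs_right in HB by (pose proof (Hpos _ HpA); lra).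
  rewrite ES, Heq in HB. fold K0 in HB.
  assert (A <= A ^ 2) by nra. assert (1 <= A ^ 2) by nra.
  assert (A <= A ^ 2 * A ^ 2) by nra.
  assert (K0 * A = 2 * K0 + M) by (unfold A; field; lra).
  nra.
Qed.

Lemma nr_np s : admissible Omega_np s -> ~ realizes Omega_np s.
Proof.
  intros [HC [Hpos [M HM]]] HR.
  assert (Hop : forall q, Omega_np q -> locally q Omega_np) by apply (open_rect (-1) 0 0 1).
  assert (Hin : forall a, a <= -2 -> a <> 0 /\ 0 - a <> 0 /\ Omega_np (/ a, / (0 - a))).
  { intros a Ha. pose proof (inv_neg2 a Ha). replace (0 - a) with (- a) by ring.
    rewrite Rinv_opp. split; [lra|]. split; [lra|]. split; simpl; lra. }
  set (K0 := hcurve s 0 (-2)).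
  assert (HK0 : 0 < K0).
  { unfold K0, hcurve. destruct (Hin (-2) ltac:(lra)) as [_ [_ Hp]].
    pose proof (Hpos _ Hp). apply Rmult_lt_0_compat; [lra|].
    assert (/ -2 <> 0) by (apply Rinv_neq_0_compat; lra).
    assert (/ (0 - -2) <> 0) by (apply Rinv_neq_0_compat; lra).
    assert (0 < (/ -2) ^ 2) by (apply pow2_gt_0; auto).
    assert (0 < (/ (0 - -2)) ^ 2) by (apply pow2_gt_0; auto). nra. }
  assert (HM0 : 0 <= M).
  { destruct (Hin (-2) ltac:(lra)) as [_ [_ Hp]]. pose proof (HM _ Hp). pose proof (Rabs_pos (s (/ -2, / (0 - -2)))). lra. }
  set (A := - (2 + M / K0)).
  assert (HA : A <= -2) by (unfold A; assert (0 <= M / K0) by (apply Rdiv_le_0_compat; lra); lra).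
  assert (Heq : hcurve s 0 (-2) = hcurve s 0 A).
  { apply (hcurve_const s Omega_np 0 A (-2) Hop HC HR HA). intros a Ha. apply Hin; lra. }
  destruct (Hin A HA) as [HA1 [HA2 HpA]].
  assert (ES : s (/ A, / (0 - A)) = hcurve s 0 A * (A ^ 2 * A ^ 2)).
  { unfold hcurve. field. lra. }
  pose proof (HM _ HpA) as HB. rewrite Rabs_right in HB by (pose proof (Hpos _ HpA); lra).
  rewrite ES, <- Heq in HB. fold K0 in HB.
  assert (- A <= A ^ 2) by nra. assert (1 <= A ^ 2) by nra.
  assert (- A <= A ^ 2 * A ^ 2) by nra.
  assert (K0 * (- A) = 2 * K0 + M) by (unfold A; field; lra).
  nra.
Qed.


Lemma final_ineq S1 S2 M M' c d :
  0 < S1 -> 0 < S2 -> S2 <= M -> 1 <= S1 * M' -> 0 <= M' ->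
  c = 4 + 64 * M * M' -> 0 < d -> d ^ 2 < c ^ 2 -> S1 * c ^ 4 = 64 * S2 * d ^ 2 -> False.
Proof.
  intros H1 H2 H3 H4 H5 Hc Hd Hdc E.
  assert (0 <= M) by lra.
  set (P := 64 * M * M') in *.
  assert (0 <= P) by (unfold P; nra).
  assert (P < c ^ 2) by nra.
  assert (c ^ 4 <= S1 * M' * c ^ 4) by (assert (0 <= c ^ 4) by nra; nra).
  assert (S1 * M' * c ^ 4 = 64 * S2 * M' * d ^ 2) by (rewrite <- (Rmult_comm M'); nra).
  assert (64 * S2 * M' * d ^ 2 <= P * d ^ 2) by (unfold P; assert (0 <= d ^ 2) by nra; nra).
  assert (P * d ^ 2 < c ^ 2 * c ^ 2).
  { assert (0 < d ^ 2) by nra. assert (P * d ^ 2 <= P * c ^ 2) by nra. nra. }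
  assert (c ^ 4 = c ^ 2 * c ^ 2) by ring. lra.
Qed.

Lemma inv_lb (s : pt -> R) (Om : pt -> Prop) M' p :
  (forall p, Om p -> 0 < s p) -> (forall p, Om p -> Rabs (/ s p) <= M') -> Om p ->
  1 <= s p * M' /\ 0 <= M'.
Proof.
  intros Hpos HM' Hp. pose proof (Hpos p Hp). pose proof (HM' p Hp).
  rewrite Rabs_right in H0 by (left; apply Rinv_0_lt_compat; lra).
  assert (0 < / s p) by (apply Rinv_0_lt_compat; lra).
  assert (s p * / s p = 1) by (field; lra). split; nra.
Qed.

Lemma nr_pp s : admissible Omega_pp s -> inv_bounded Omega_pp s -> ~ realizes Omega_pp s.
Proof.
  intros [HC [Hpos [M HM]]] [M' HM'] HR.
  assert (Hop : forall q, Omega_pp q -> locally q Omega_pp) by apply (open_rect 0 1 0 1).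
  assert (Hp0 : Omega_pp (/ 2, / 2)) by (pose proof (inv_pos2 2 ltac:(lra)); split; simpl; lra).
  destruct (inv_lb s Omega_pp M' _ Hpos HM' Hp0) as [_ HM'0].
  assert (HM0 : 0 <= M) by (pose proof (HM _ Hp0); pose proof (Rabs_pos (s (/2, /2))); lra).
  set (c := 4 + 64 * M * M').
  assert (Hc : 4 <= c) by (unfold c; nra).
  assert (Hin : forall a, 2 <= a <= c / 2 -> a <> 0 /\ c - a <> 0 /\ Omega_pp (/ a, / (c - a))).
  { intros a Ha. pose proof (inv_pos2 a ltac:(lra)). pose proof (inv_pos2 (c - a) ltac:(lra)).
    split; [lra|]. split; [lra|]. split; simpl; lra. }
  assert (Heq : hcurve s c (c / 2) = hcurve s c 2).
  { apply (hcurve_const s Omega_pp c 2 (c / 2) Hop HC HR ltac:(lra)). exact Hin. }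
  destruct (Hin 2 ltac:(lra)) as [_ [_ Hp1]].
  destruct (Hin (c / 2) ltac:(lra)) as [_ [_ Hp2]].
  assert (E1 : s (/ 2, / (c - 2)) = hcurve s c 2 * (4 * (c - 2) ^ 2)).
  { unfold hcurve. field. lra. }
  assert (E2 : s (/ (c / 2), / (c - c / 2)) = hcurve s c (c / 2) * (c ^ 4 / 16)).
  { unfold hcurve. field. lra. }
  destruct (inv_lb s Omega_pp M' _ Hpos HM' Hp1) as [HL _].
  pose proof (HM _ Hp2) as HB. rewrite Rabs_right in HB by (pose proof (Hpos _ Hp2); lra).
  apply (final_ineq (s (/ 2, / (c - 2))) (s (/ (c / 2), / (c - c / 2))) M M' c (c - 2));
    (try (apply Hpos; assumption)); try assumption; try reflexivity; try lra; try nra;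
    rewrite E1, E2, Heq; field.
Qed.

Lemma nr_nn s : admissible Omega_nn s -> inv_bounded Omega_nn s -> ~ realizes Omega_nn s.
Proof.
  intros [HC [Hpos [M HM]]] [M' HM'] HR.
  assert (Hop : forall q, Omega_nn q -> locally q Omega_nn) by apply (open_rect (-1) 0 (-1) 0).
  assert (Hp0 : Omega_nn (/ -2, / -2)) by (pose proof (inv_neg2 (-2) ltac:(lra)); split; simpl; lra).
  destruct (inv_lb s Omega_nn M' _ Hpos HM' Hp0) as [_ HM'0].
  assert (HM0 : 0 <= M) by (pose proof (HM _ Hp0); pose proof (Rabs_pos (s (/ -2, / -2))); lra).
  set (c' := 4 + 64 * M * M').
  set (c := - c').
  assert (Hc : 4 <= c') by (unfold c'; nra).
  assert (Hin : forall a, c / 2 <= a <= -2 -> a <> 0 /\ c - a <> 0 /\ Omega_nn (/ a, / (c - a))).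
  { intros a Ha. unfold c in *. pose proof (inv_neg2 a ltac:(lra)). pose proof (inv_neg2 (- c' - a) ltac:(lra)).
    split; [lra|]. split; [lra|]. split; simpl; lra. }
  assert (Heq : hcurve s c (-2) = hcurve s c (c / 2)).
  { apply (hcurve_const s Omega_nn c (c / 2) (-2) Hop HC HR ltac:(unfold c; lra)). exact Hin. }
  destruct (Hin (-2) ltac:(unfold c; lra)) as [_ [_ Hp1]].
  destruct (Hin (c / 2) ltac:(unfold c; lra)) as [_ [_ Hp2]].
  assert (E1 : s (/ -2, / (c - -2)) = hcurve s c (-2) * (4 * (c' - 2) ^ 2)).
  { unfold hcurve. unfold c. field. lra. }
  assert (E2 : s (/ (c / 2), / (c - c / 2)) = hcurve s c (c / 2) * (c' ^ 4 / 16)).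
  { unfold hcurve. unfold c. field. lra. }
  destruct (inv_lb s Omega_nn M' _ Hpos HM' Hp1) as [HL _].
  pose proof (HM _ Hp2) as HB. rewrite Rabs_right in HB by (pose proof (Hpos _ Hp2); lra).
  apply (final_ineq (s (/ -2, / (c - -2))) (s (/ (c / 2), / (c - c / 2))) M M' c' (c' - 2));
    (try (apply Hpos; assumption)); try assumption; try reflexivity; try lra; try nra;
    rewrite E1, E2, Heq; field.
Qed.


Theorem proposition4p1 :
  (* i) *)
  (pos_stable Omega_pn /\ neg_stable Omega_np /\
   (forall sigma, admissible Omega_pn sigma -> ~ realizes Omega_pn sigma) /\
   (forall sigma, admissible Omega_np sigma -> ~ realizes Omega_np sigma)) /\
  (* ii) *)
  (forall Omega : pt -> Prop, (Omega = Omega_pp \/ Omega = Omega_nn) ->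
     ~ stable Omega /\
     (exists sigma0, admissible Omega sigma0 /\ realizes Omega sigma0) /\
     (forall sigma, admissible Omega sigma -> inv_bounded Omega sigma ->
        ~ realizes Omega sigma)).
Proof.
  split.
  - split; [|split; [|split]].
    + apply stab_generic. intros q s [Hx Hy] Hs. simpl in Hs. split; nra.
    + apply stab_generic. intros q s [Hx Hy] Hs. simpl in Hs. split; nra.
    + exact nr_pn.
    + exact nr_np.
  - intros Om [-> | ->]; split; [exact nonstab_pp| split | exact nonstab_nn | split].
    + exists sig0. apply sig0_good.
      * apply (open_rect 0 1 0 1).
      * intros q [Hx Hy]. nra.
    + exact nr_pp.
    + exists sig0. apply sig0_good.
      * apply (open_rect (-1) 0 (-1) 0).
      * intros q [Hx Hy]. nra.
    + exact nr_nn.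
Qed.
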